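(* Let $N\ge 2$ and $m\ge 1$ be integers, and let $\omega_N$ denote a primitive $N$th root of unity (not needed below, fixed only for definiteness). Suppose the quantum block code $$|k\rangle\longmapsto |k_{\rm encode}\rangle=\sum_{i_1,\dots,i_m\in\mathbb Z_N} a^{(k)}_{i_1,\dots,i_m}\,|i_1,\dots,i_m\rangle,\qquad k\in\mathbb Z_N,$$ which encodes one $N$-state register into $m$ $N$-state registers, corrects the set $E$ of errors (operators on $m$ registers). Let $\mu=(\mu_{ip})_{i,p\ge 1}$ be an integer matrix each of whose rows has only finitely many nonzero entries, such that the map $\mathbb Z_N^{\mathbb Z^+}\to\mathbb Z_N^{\mathbb Z^+}$, $\mathbf k=(k_p)_{p\ge1}\mapsto\big(\sum_p\mu_{ip}k_p \bmod N\big)_{i\ge 1}$ is invertible. Define the encoding of basis states $|\mathbf k\rangle=|k_1,k_2,\dots\rangle$ ($k_p\in\mathbb Z_N$) by $$|\mathbf k\rangle\longmapsto|\mathbf k_{\rm encode}\rangle=\bigotimes_{i=1}^{+\infty}\Big[\sum_{j_{i1},\dots,j_{im}} a^{(\sum_p\mu_{ip}k_p \bmod N)}_{j_{i1},\dots,j_{im}}\,|j_{i1},\dots,j_{im}\rangle\Big],$$ i.e. the $i$-th block of $m$ output registers carries the block-encoding of $\sum_p\mu_{ip}k_p \bmod N$. Then this encoding is a quantum convolutional code of rate $1/m$ which corrects the error set $E\otimes E\otimes\cdots=\{\mathcal E_1\otimes\mathcal E_2\otimes\cdots:\mathcal E_i\in E\}$, where $\mathcal E_i$ acts on the $i$-th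 block of $m$ output registers.
   Context: Each quantum register is an $N$-state system with orthonormal computational basis $|0\rangle,\dots,|N-1\rangle$, labelled by $\mathbb Z_N$; states of (possibly infinitely many) registers are spanned by orthonormal basis states $|k_1,k_2,\dots\rangle$. An encoding is a linear map defined on computational basis states of the input registers, $|\mathbf k\rangle\mapsto|\mathbf k_{\rm encode}\rangle$. An encoding corrects (handles) a set $E$ of error operators if for all $\mathcal A,\mathcal B\in E$ and all input basis labels $\mathbf i,\mathbf j$ one has $\langle \mathbf i_{\rm encode}|\mathcal A^\dagger\mathcal B|\mathbf j_{\rm encode}\rangle=\Lambda_{\mathcal A,\mathcal B}\,\delta_{\mathbf i\mathbf j}$ for a complex constant $\Lambda_{\mathcal A,\mathcal B}$ independent of $\mathbf i,\mathbf j$. The rate of a code is the number of input registers divided by the number of output registers (per block). *)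

(* Defs.v *)
From HB Require Import structures.
From mathcomp Require Import all_boot all_order all_algebra.
From mathcomp Require Import complex.
From mathcomp Require Import boolp reals.
Set Implicit Arguments. Unset Strict Implicit. Unset Printing Implicit Defensive.
Import Order.TTheory GRing.Theory Num.Theory.
Local Open Scope ring_scope.

(* Computational basis labels of a block of m N-state registers:
   a label i_1..i_m is a finite function 'I_m -> 'Z_N.  (Use with 1 < N.) *)
Definition blockLabel (N m : nat) := {ffun 'I_m -> 'Z_N}.

Definition blockVec (R : realType) (N m : nat) := blockLabel N m -> R[i].

(* An operator on a block of m registers, given by its matrix entries
   A x y = <x|A|y>. *)
Definition blockOp (R : realType) (N m : nat) :=
  blockLabel N m -> blockLabel N m -> R[i].

(* <u| A^dagger B |v>  for block vectors u v and block operators A B. *)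
Definition sandwich (R : realType) (N m : nat)
    (u : blockVec R N m) (A B : blockOp R N m) (v : blockVec R N m) : R[i] :=
  \sum_(x : blockLabel N m) \sum_(y : blockLabel N m) \sum_(z : blockLabel N m)
     (u x)^* * (A z x)^* * B z y * v y.

(* The block code |k> |-> |k_encode> = sum_x a k x |x>, k in Z_N, corrects
   the error set E (Knill–Laflamme condition as in the paper). *)
Definition block_corrects (R : realType) (N m : nat)
    (a : 'Z_N -> blockVec R N m) (E : blockOp R N m -> Prop) : Prop :=
  forall A B, E A -> E B ->
  exists Lam : R[i], forall k k' : 'Z_N,
    sandwich (a k) A B (a k') = Lam * (k == k')%:R.

(* The linear map k |-> (sum_p mu_ip k_p mod N)_i on Z_N^{Z+}.  Indices start
   at 0 instead of 1.  Row i of mu is supported in p < s i, so the sum is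
   finite; any such bound s gives the same map. *)
Definition muMap (N : nat) (mu : nat -> nat -> int) (s : nat -> nat)
    (k : nat -> 'Z_N) : nat -> 'Z_N :=
  fun i => \sum_(p < s i) (mu i p)%:~R * k p.

Definition prod_cvg_to (R : realType) (u : nat -> R[i]) (l : R[i]) : Prop :=
  forall e : R, 0 < e -> exists n0 : nat, forall n : nat, (n0 <= n)%N ->
    `| \prod_(i < n) u i - l | < (e%:C)%C.

(* Infinite product: the limit of the partial products when it exists
   (the limit is unique); 0 by convention otherwise. *)
Definition infprod (R : realType) (u : nat -> R[i]) : R[i] :=
  match pselect (exists l, prod_cvg_to u l) with
  | left h => projT1 (cid h)
  | right _ => 0
  end.

(* Inner product <k_enc| (⊗_i A_i)^dagger (⊗_i B_i) |k'_enc> of two encoded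
   product states of the infinite register chain: the i-th block of m output
   registers carries the block encoding of (muMap k) i, so (as for infinite
   tensor products of product vectors) the matrix element is the infinite
   product of the blockwise matrix elements. *)
Definition conv_sandwich (R : realType) (N m : nat)
    (a : 'Z_N -> blockVec R N m) (mu : nat -> nat -> int) (s : nat -> nat)
    (k : nat -> 'Z_N) (As Bs : nat -> blockOp R N m) (k' : nat -> 'Z_N) : R[i] :=
  infprod (fun i => sandwich (a (muMap mu s k i)) (As i) (Bs i)
                             (a (muMap mu s k' i))).

Definition conv_corrects (R : realType) (N m : nat)
    (a : 'Z_N -> blockVec R N m) (mu : nat -> nat -> int) (s : nat -> nat)
    (E : blockOp R N m -> Prop) : Prop :=
  forall As Bs : nat -> blockOp R N m,
    (forall i, E (As i)) -> (forall i, E (Bs i)) ->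
  exists Lam : R[i], forall k k' : nat -> 'Z_N,
    (k = k' -> conv_sandwich a mu s k As Bs k' = Lam) /\
    (k <> k' -> conv_sandwich a mu s k As Bs k' = 0).

(* Main.v *)
Require Import Defs.
From HB Require Import structures.
From mathcomp Require Import all_boot all_order all_algebra.
From mathcomp Require Import complex.
From mathcomp Require Import boolp reals.
Import Order.TTheory GRing.Theory Num.Theory.
Local Open Scope ring_scope.

Lemma infprod_zero (R : realType) (u : nat -> R[i]) (i0 : nat) :
  u i0 = 0 -> infprod u = 0.
Proof.
move=> u0.
have P0 : forall n, (i0 < n)%N -> \prod_(i < n) u i = 0.
  move=> n hn; rewrite (bigD1 (Ordinal hn)) //= u0 mul0r //.
rewrite /infprod; case: pselect => // h.
case: (cid h) => l hl /=.
apply: contrapT => /eqP l0.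
have [e El] : exists e : R, `|l| = (e%:C)%C by rewrite normc_def; eexists.
have lp : 0 < `|l| by rewrite normr_gt0.
have ep : 0 < e by move: lp; rewrite El ltcE => /andP[_].
have [n0 Hn] := hl _ ep.
have := Hn (maxn n0 i0.+1) (leq_maxl _ _).
rewrite P0; last by rewrite leq_max leqnn orbT.
by rewrite sub0r normrN El ltxx.
Qed.

Theorem theorem1 (R : realType) (N m : nat) (hN : (1 < N)%N) (hm : (0 < m)%N)
    (a : 'Z_N -> blockVec R N m) (E : blockOp R N m -> Prop)
    (mu : nat -> nat -> int) (s : nat -> nat)
    (hs : forall i p, (s i <= p)%N -> mu i p = 0)
    (hbij : bijective (@muMap N mu s))
    (hcode : block_corrects a E) :
  conv_corrects a mu s E.
Proof.
move=> As Bs hA hB.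
pose L i := projT1 (cid (hcode _ _ (hA i) (hB i))).
have HL : forall i k k', sandwich (a k) (As i) (Bs i) (a k') = L i * (k == k')%:R.
  by move=> i; rewrite /L; case: (cid _) => /= l hl.
exists (infprod L) => k k'; split.
  move=> <-; rewrite /conv_sandwich; congr infprod; apply: funext => i.
  by rewrite HL eqxx mulr1.
move=> kk.
have [i0 hi0] : exists i0, muMap mu s k i0 != muMap mu s k' i0.
  apply: contrapT => hn; apply: kk; apply: (bij_inj hbij).
  apply: funext => i; apply/eqP; apply: contrapT => hi; apply: hn; exists i; exact/negP.
apply: (@infprod_zero _ _ i0).
by rewrite HL (negbTE hi0) mulr0.
Qed.
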